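(* Let $\lambda_1>\lambda_2>\lambda_3>0$ and $D=\mathrm{diag}(\lambda_1,\lambda_2,\lambda_3)$. Then: (i) The rotation $\mathrm{diag}(-1,-1,1)$ is the unique global maximum of $\widetilde W_{1,0}(\cdot;D)$ on $SO(3)$. (ii) If $\lambda_1+\lambda_2>2$, the global minima of $\widetilde W_{1,0}(\cdot;D)$ on $SO(3)$ are exactly the two rotations $$\begin{pmatrix}c & \mp\sqrt{1-c^2} & 0\\ \pm\sqrt{1-c^2} & c & 0\\ 0&0&1\end{pmatrix},\qquad c=\frac{2}{\lambda_1+\lambda_2},$$ with minimal value $(\lambda_3-1)^2+\frac12(\lambda_1-\lambda_2)^2$. (iii) If $\lambda_1+\lambda_2\le2$, then $\mathbb I_3$ is the unique global minimum of $\widetilde W_{1,0}(\cdot;D)$ on $SO(3)$.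
   Context: $\mathrm{sym}(Y)=\tfrac12(Y+Y^T)$, $\|Y\|^2=\mathrm{tr}(Y^TY)$ (Frobenius norm). $\widetilde W_{1,0}(R;D)=\|\mathrm{sym}(R^TD-\mathbb I_3)\|^2$ for $R\in SO(3)$. *)

(* Defs.v *)
(* matrices over an arbitrary real closed field R
   (the paper's R is the reals; the statement is purely algebraic/order-theoretic). *)
From HB Require Import structures.
From mathcomp Require Import all_boot all_order all_algebra.
Set Implicit Arguments. Unset Strict Implicit. Unset Printing Implicit Defensive.
Import Order.TTheory GRing.Theory Num.Theory.
Local Open Scope ring_scope.

Definition mx3 {R : rcfType} (a b c d e f g h k : R) : 'M[R]_3 :=
  \matrix_(i < 3, j < 3)
    nth 0 (nth [::] [:: [:: a; b; c]; [:: d; e; f]; [:: g; h; k]] i) j.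

Definition symm {R : rcfType} (Y : 'M[R]_3) : 'M[R]_3 := 2^-1 *: (Y + Y^T).

Definition frob2 {R : rcfType} (Y : 'M[R]_3) : R := \tr (Y^T *m Y).

Definition W10 {R : rcfType} (D Q : 'M[R]_3) : R :=
  frob2 (symm (Q^T *m D - 1%:M)).

Definition SO3 {R : rcfType} (Q : 'M[R]_3) : Prop :=
  Q^T *m Q = 1%:M /\ \det Q = 1.

Definition isGlobalMin {R : rcfType} (D Q : 'M[R]_3) : Prop :=
  SO3 Q /\ forall S : 'M[R]_3, SO3 S -> W10 D Q <= W10 D S.

Definition isGlobalMax {R : rcfType} (D Q : 'M[R]_3) : Prop :=
  SO3 Q /\ forall S : 'M[R]_3, SO3 S -> W10 D S <= W10 D Q.

(* Main.v *)
Require Import Defs.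
From HB Require Import structures.
From mathcomp Require Import all_boot all_order all_algebra.
From mathcomp Require Import ring lra.
Import Order.TTheory GRing.Theory Num.Theory.
Local Open Scope ring_scope.


Definition i0 : 'I_3 := @Ordinal 3 0 isT.
Definition i1 : 'I_3 := @Ordinal 3 1 isT.
Definition i2 : 'I_3 := @Ordinal 3 2 isT.

Ltac ocase i := let Hi := fresh in case: i => [[|[|[|?]]] Hi] //.

Lemma mx3E {R : rcfType} (A : 'M[R]_3) : A = mx3 (A i0 i0) (A i0 i1) (A i0 i2)
  (A i1 i0) (A i1 i1) (A i1 i2) (A i2 i0) (A i2 i1) (A i2 i2).
Proof.
apply/matrixP => i j; rewrite /mx3 mxE /=.
by case: i => [[|[|[|i]]]] // Hi; case: j => [[|[|[|j]]]] // Hj /=; congr (A _ _); apply: val_inj.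
Qed.

Lemma tr_mx3 {R : rcfType} (a b c d e f g h k : R) :
  (mx3 a b c d e f g h k)^T = mx3 a d g b e h c f k.
Proof. by apply/matrixP => i j; rewrite /mx3 !mxE; case: i => [[|[|[|i]]]] // Hi; case: j => [[|[|[|j]]]] // Hj. Qed.

Lemma mul_mx3 {R : rcfType} (a b c d e f g h k a' b' c' d' e' f' g' h' k' : R) :
  mx3 a b c d e f g h k *m mx3 a' b' c' d' e' f' g' h' k' =
  mx3 (a*a'+b*d'+c*g') (a*b'+b*e'+c*h') (a*c'+b*f'+c*k')
      (d*a'+e*d'+f*g') (d*b'+e*e'+f*h') (d*c'+e*f'+f*k')
      (g*a'+h*d'+k*g') (g*b'+h*e'+k*h') (g*c'+h*f'+k*k').
Proof.
apply/matrixP => i j; rewrite /mx3 !mxE !big_ord_recl big_ord0 !mxE /= addr0.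
case: i => [[|[|[|i]]]] // Hi; case: j => [[|[|[|j]]]] // Hj; by rewrite /= addrA.
Qed.

Lemma add_mx3 {R : rcfType} (a b c d e f g h k a' b' c' d' e' f' g' h' k' : R) :
  mx3 a b c d e f g h k + mx3 a' b' c' d' e' f' g' h' k' =
  mx3 (a+a') (b+b') (c+c') (d+d') (e+e') (f+f') (g+g') (h+h') (k+k').
Proof. by apply/matrixP => i j; rewrite /mx3 !mxE; case: i => [[|[|[|i]]]] // Hi; case: j => [[|[|[|j]]]] // Hj. Qed.

Lemma opp_mx3 {R : rcfType} (a b c d e f g h k : R) :
  - mx3 a b c d e f g h k = mx3 (-a) (-b) (-c) (-d) (-e) (-f) (-g) (-h) (-k).
Proof. by apply/matrixP => i j; rewrite /mx3 !mxE; case: i => [[|[|[|i]]]] // Hi; case: j => [[|[|[|j]]]] // Hj. Qed.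

Lemma scale_mx3 {R : rcfType} (x a b c d e f g h k : R) :
  x *: mx3 a b c d e f g h k = mx3 (x*a) (x*b) (x*c) (x*d) (x*e) (x*f) (x*g) (x*h) (x*k).
Proof. by apply/matrixP => i j; rewrite /mx3 !mxE; case: i => [[|[|[|i]]]] // Hi; case: j => [[|[|[|j]]]] // Hj. Qed.

Lemma one_mx3 {R : rcfType} : (1%:M : 'M[R]_3) = mx3 1 0 0 0 1 0 0 0 1.
Proof. by apply/matrixP => i j; rewrite /mx3 !mxE; case: i => [[|[|[|i]]]] // Hi; case: j => [[|[|[|j]]]] // Hj. Qed.

Lemma trace_mx3 {R : rcfType} (a b c d e f g h k : R) : \tr (mx3 a b c d e f g h k) = a + e + k.
Proof. by rewrite /mxtrace !big_ord_recl big_ord0 !mxE /= addr0 addrA. Qed.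

Lemma det_mx3 {R : rcfType} (a b c d e f g h k : R) : \det (mx3 a b c d e f g h k) =
  a*(e*k - f*h) - b*(d*k - f*g) + c*(d*h - e*g).
Proof.
rewrite (expand_det_row _ ord0) !big_ord_recl big_ord0 /cofactor.
rewrite !(expand_det_row _ ord0) !big_ord_recl !big_ord0 /cofactor !det_mx11 !mxE /=.
rewrite /bump /=; ring.
Qed.

Lemma mx3_inj {R : rcfType} (a b c d e f g h k a' b' c' d' e' f' g' h' k' : R) :
  mx3 a b c d e f g h k = mx3 a' b' c' d' e' f' g' h' k' ->
  [/\ a = a', b = b', c = c', d = d' & [/\ e = e', f = f', g = g', h = h' & k = k']].
Proof.
move=> E.
have F := fun i j => congr1 (fun M : 'M[R]_3 => M i j) E.
move: (F i0 i0) (F i0 i1) (F i0 i2) (F i1 i0) (F i1 i1) (F i1 i2) (F i2 i0) (F i2 i1) (F i2 i2).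
by rewrite !mxE /=.
Qed.

Definition Wp {R : rcfType} (l1 l2 l3 a b c d e f g h k : R) : R :=
  (l1*a-1)^+2 + (l2*e-1)^+2 + (l3*k-1)^+2 +
  2^-1 * ((l1*b+l2*d)^+2 + (l1*c+l3*g)^+2 + (l2*f+l3*h)^+2).

Lemma W_poly {R : rcfType} (l1 l2 l3 a b c d e f g h k : R) :
  W10 (mx3 l1 0 0 0 l2 0 0 0 l3) (mx3 a b c d e f g h k) = Wp l1 l2 l3 a b c d e f g h k.
Proof.
rewrite /W10 /symm /frob2 tr_mx3 mul_mx3 one_mx3 opp_mx3 add_mx3 tr_mx3 add_mx3
  scale_mx3 tr_mx3 mul_mx3 trace_mx3 /Wp.
have h2 : (2:R) != 0 by rewrite pnatr_eq0.
by field.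
Qed.

Lemma SO3_mx3 {R : rcfType} (a b c d e f g h k : R) :
  SO3 (mx3 a b c d e f g h k) ->
  [/\ a*a+b*b+c*c = 1, d*d+e*e+f*f = 1, g*g+h*h+k*k = 1,
      a*d+b*e+c*f = 0 & [/\ a*g+b*h+c*k = 0, d*g+e*h+f*k = 0,
      a*a+d*d+g*g = 1, b*b+e*e+h*h = 1 & [/\ c*c+f*f+k*k = 1 &
      a*(e*k - f*h) - b*(d*k - f*g) + c*(d*h - e*g) = 1]]].
Proof.
case=> HT Hd.
have HT' := mulmx1C HT.
move: HT HT' Hd; rewrite tr_mx3 !mul_mx3 one_mx3 det_mx3.
case/mx3_inj => c11 c12 c13 _ [c22 c23 _ _ c33].
case/mx3_inj => r11 r12 r13 _ [r22 r23 _ _ r33] Hd.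
split; try lra; split; try lra.
Qed.

Lemma sos3_0 {R : rcfType} (x y z : R) : x^+2 + y^+2 + z^+2 = 0 ->
  [/\ x = 0, y = 0 & z = 0].
Proof.
move=> H; have := sqr_ge0 y; have := sqr_ge0 z; have := sqr_ge0 x => hx hz hy.
split; apply/eqP; rewrite -sqrf_eq0; apply/eqP; lra.
Qed.

Lemma rot_cof {R : rcfType} (a b c d e f g h k : R) :
  a*a+b*b+c*c = 1 -> d*d+e*e+f*f = 1 -> g*g+h*h+k*k = 1 ->
  a*d+b*e+c*f = 0 ->
  a*(e*k - f*h) - b*(d*k - f*g) + c*(d*h - e*g) = 1 ->
  [/\ g = b*f - c*e, h = c*d - a*f & k = a*e - b*d].
Proof.
move=> H1 H2 H3 H12 Hd.
have E1 : (a*a+b*b+c*c)*(d*d+e*e+f*f) = 1 by rewrite H1 H2 mulr1.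
have E2 : (a*d+b*e+c*f)^+2 = 0 by rewrite H12 expr0n.
have [] := (@sos3_0 _ (g - (b*f - c*e)) (h - (c*d - a*f)) (k - (a*e - b*d))).
  lra.
by move=> /eqP; rewrite subr_eq0 => /eqP -> /eqP; rewrite subr_eq0 => /eqP ->
  /eqP; rewrite subr_eq0 => /eqP ->.
Qed.

Definition Fd {R : rcfType} (l1 l2 l3 x y z : R) : R :=
  2^-1 * (l1^+2 + l2^+2 + l3^+2) + 2^-1 * (l1*x+l2*y+l3*z-2)^+2 + 1
  - (l2 * l3 * x + l1 * l3 * y + l1 * l2 * z).

Lemma SO3_facts {R : rcfType} (l1 l2 l3 : R) {a b c d e f g h k : R} :
  SO3 (mx3 a b c d e f g h k) ->
  [/\ W10 (mx3 l1 0 0 0 l2 0 0 0 l3) (mx3 a b c d e f g h k) = Fd l1 l2 l3 a e k,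
      0 <= 1+a-e-k, 0 <= 1-a+e-k, 0 <= 1-a-e+k & 0 <= 1+a+e+k].
Proof.
case/SO3_mx3 => r1 r2 r3 r12 [r13 r23 c1 c2 [c3 hd]].
have [_ _ ck] := (@rot_cof _ a b c d e f g h k r1 r2 r3 r12 hd).
have [ca _ _] := (@rot_cof _ d e f g h k a b c r2 r3 r1 ltac:(lra) ltac:(lra)).
have [_ ce _] := (@rot_cof _ g h k a b c d e f r3 r1 r2 ltac:(lra) ltac:(lra)).
have hW : Wp l1 l2 l3 a b c d e f g h k = Fd l1 l2 l3 a e k.
  have f1 : l1^+2 * (a*a+b*b+c*c) = l1^+2 by rewrite r1 mulr1.
  have f2 : l2^+2 * (d*d+e*e+f*f) = l2^+2 by rewrite r2 mulr1.
  have f3 : l3^+2 * (g*g+h*h+k*k) = l3^+2 by rewrite r3 mulr1.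
  have f4 : l1 * l2*k = l1 * l2*(a*e - b*d) by rewrite -ck.
  have f5 : l1 * l3*e = l1 * l3*(k*a - g*c) by rewrite -ce.
  have f6 : l2 * l3*a = l2 * l3*(e*k - f*h) by rewrite -ca.
  rewrite /Wp /Fd; lra.
have pAD : (1+a-e-k)*(1+a+e+k) = (h-f)^+2 by lra.
have pBD : (1-a+e-k)*(1+a+e+k) = (c-g)^+2 by lra.
have pCD : (1-a-e+k)*(1+a+e+k) = (d-b)^+2 by lra.
have pAB : (1+a-e-k)*(1-a+e-k) = (b+d)^+2 by lra.
have pAC : (1+a-e-k)*(1-a-e+k) = (c+g)^+2 by lra.
have pBC : (1-a+e-k)*(1-a-e+k) = (f+h)^+2 by lra.
have := sqr_ge0 (h-f); have := sqr_ge0 (c-g); have := sqr_ge0 (d-b);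
have := sqr_ge0 (b+d); have := sqr_ge0 (c+g); have := sqr_ge0 (f+h).
have := sqr_ge0 (1+a-e-k); have := sqr_ge0 (1-a+e-k); have := sqr_ge0 (1-a-e+k);
have := sqr_ge0 (1+a+e+k).
move=> q1 q2 q3 q4 s1 s2 s3 s4 s5 s6.
rewrite W_poly hW; split => //; nra.
Qed.

Lemma Fmax_lem {R : rcfType} {l1 l2 l3 x y z : R} :
  l2 < l1 -> l3 < l2 -> 0 < l3 ->
  0 <= 1+x-y-z -> 0 <= 1-x+y-z -> 0 <= 1-x-y+z -> 0 <= 1+x+y+z ->
  Fd l1 l2 l3 x y z <= l1^+2 + l2^+2 + l3^+2 + 2*(l1+l2-l3) + 3 /\
  (Fd l1 l2 l3 x y z = l1^+2 + l2^+2 + l3^+2 + 2*(l1+l2-l3) + 3 ->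
    [/\ x = -1, y = -1 & z = 1]).
Proof.
move=> h12 h23 h3 hA hB hC hD.
set A := 1+x-y-z; set B := 1-x+y-z; set C := 1-x-y+z; set D := 1+x+y+z.
set t1 := l1-l2-l3; set t2 := -l1+l2-l3; set t3 := -l1-l2+l3; set t0 := l1+l2+l3.
set L := (l1-l3)*A + (l2-l3)*B + (l1+l2)*D.
set S := A*B*(t1-t2)^+2 + A*C*(t1-t3)^+2 + A*D*(t1-t0)^+2 + B*C*(t2-t3)^+2
  + B*D*(t2-t0)^+2 + C*D*(t3-t0)^+2.
have id : l1^+2 + l2^+2 + l3^+2 + 2*(l1+l2-l3) + 3 - Fd l1 l2 l3 x y z = L + S / 32.
  rewrite /L /S /A /B /C /D /t0 /t1 /t2 /t3 /Fd.
  have h2 : (2:R) != 0 by rewrite pnatr_eq0.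
  have h32 : (32:R) != 0 by rewrite pnatr_eq0.
  by field.
have S0 : 0 <= S.
  by rewrite /S; repeat apply: addr_ge0; (apply: mulr_ge0;
    [apply: mulr_ge0 | apply: sqr_ge0]).
have LA : 0 <= (l1-l3)*A by apply: mulr_ge0 => //; lra.
have LB : 0 <= (l2-l3)*B by apply: mulr_ge0 => //; lra.
have LD : 0 <= (l1+l2)*D by apply: mulr_ge0 => //; lra.
have L0 : 0 <= L by rewrite /L; lra.
split; first lra.
move=> Heq.
have H0 : L = 0 by lra.
rewrite /L in H0.
have eA : (l1-l3)*A = 0 by lra.
have eB : (l2-l3)*B = 0 by lra.
have eD : (l1+l2)*D = 0 by lra.
have zA : A = 0 by move/eqP: eA; rewrite mulf_eq0 => /orP[/eqP|/eqP] //; lra.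
have zB : B = 0 by move/eqP: eB; rewrite mulf_eq0 => /orP[/eqP|/eqP] //; lra.
have zD : D = 0 by move/eqP: eD; rewrite mulf_eq0 => /orP[/eqP|/eqP] //; lra.
rewrite /A /B /D in zA zB zD.
split; lra.
Qed.

Lemma Fmin2_lem {R : rcfType} {l1 l2 l3 x y z : R} :
  l2 < l1 -> l3 < l2 -> 0 < l3 -> 2 < l1 + l2 ->
  0 <= 1+x-y-z -> 0 <= 1-x+y-z -> 0 <= 1-x-y+z -> 0 <= 1+x+y+z ->
  (l3 - 1) ^+ 2 + 2^-1 * (l1 - l2) ^+ 2 <= Fd l1 l2 l3 x y z /\
  (Fd l1 l2 l3 x y z = (l3 - 1) ^+ 2 + 2^-1 * (l1 - l2) ^+ 2 ->
    [/\ x = 2 / (l1 + l2), y = 2 / (l1 + l2) & z = 1]).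
Proof.
move=> h12 h23 h3 hp hA hB hC hD.
set A := 1+x-y-z; set B := 1-x+y-z; set C := 1-x-y+z.
set u := ((l2+l3)*A + (l1+l3)*B + (l1+l2)*C)/4.
set P := (l1+l2-2-2*u)^+2.
have id : Fd l1 l2 l3 x y z - ((l3 - 1) ^+ 2 + 2^-1 * (l1 - l2) ^+ 2) =
  P/2 + ((l1-l3)*(l2+l3))*A/2 + ((l2-l3)*(l1+l3))*B/2.
  rewrite /P /u /A /B /C /Fd.
  have h2 : (2:R) != 0 by rewrite pnatr_eq0.
  have h4 : (4:R) != 0 by rewrite pnatr_eq0.
  by field.
have P0 : 0 <= P by apply: sqr_ge0.
have LA : 0 <= ((l1-l3)*(l2+l3))*A by apply: mulr_ge0 => //; apply: mulr_ge0; lra.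
have LB : 0 <= ((l2-l3)*(l1+l3))*B by apply: mulr_ge0 => //; apply: mulr_ge0; lra.
split; first lra.
move=> Heq.
have eA : ((l1-l3)*(l2+l3))*A = 0 by lra.
have eB : ((l2-l3)*(l1+l3))*B = 0 by lra.
have eP : P = 0 by lra.
have pos1 : 0 < (l1-l3)*(l2+l3) by apply: mulr_gt0; lra.
have pos2 : 0 < (l2-l3)*(l1+l3) by apply: mulr_gt0; lra.
have zA : A = 0 by move/eqP: eA; rewrite mulf_eq0 => /orP[/eqP|/eqP] //; lra.
have zB : B = 0 by move/eqP: eB; rewrite mulf_eq0 => /orP[/eqP|/eqP] //; lra.
have zP : l1+l2-2-2*u = 0 by apply/eqP; rewrite -sqrf_eq0; apply/eqP.
rewrite /u zA zB /C in zP.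
rewrite /A in zA; rewrite /B in zB.
have zz : z = 1 by lra.
have yx : y = x by lra.
rewrite zz yx in zP.
have px : (l1+l2)*x = 2 by lra.
have hpn : l1 + l2 != 0 by apply/eqP; lra.
have ex : x = 2 / (l1+l2) by rewrite -px; field.
by split => //; rewrite yx.
Qed.

Lemma Fmin3_lem {R : rcfType} {l1 l2 l3 x y z : R} :
  l2 < l1 -> l3 < l2 -> 0 < l3 -> l1 + l2 <= 2 ->
  0 <= 1+x-y-z -> 0 <= 1-x+y-z -> 0 <= 1-x-y+z -> 0 <= 1+x+y+z ->
  Fd l1 l2 l3 1 1 1 <= Fd l1 l2 l3 x y z /\
  (Fd l1 l2 l3 x y z = Fd l1 l2 l3 1 1 1 -> [/\ x = 1, y = 1 & z = 1]).
Proof.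
move=> h12 h23 h3 hp hA hB hC hD.
set A := 1+x-y-z; set B := 1-x+y-z; set C := 1-x-y+z.
set u := ((l2+l3)*A + (l1+l3)*B + (l1+l2)*C)/4.
have id : Fd l1 l2 l3 x y z - Fd l1 l2 l3 1 1 1 =
  2*u^+2 + 2*(2-(l1+l2))*u + ((l1-l3)*(l2+l3))*A/2 + ((l2-l3)*(l1+l3))*B/2.
  rewrite /u /A /B /C /Fd.
  have h2 : (2:R) != 0 by rewrite pnatr_eq0.
  have h4 : (4:R) != 0 by rewrite pnatr_eq0.
  by field.
have LA : 0 <= ((l1-l3)*(l2+l3))*A by apply: mulr_ge0 => //; apply: mulr_ge0; lra.
have LB : 0 <= ((l2-l3)*(l1+l3))*B by apply: mulr_ge0 => //; apply: mulr_ge0; lra.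
have LC : 0 <= (l1+l2)*C by apply: mulr_ge0 => //; lra.
have LA' : 0 <= (l2+l3)*A by apply: mulr_ge0 => //; lra.
have LB' : 0 <= (l1+l3)*B by apply: mulr_ge0 => //; lra.
have u0 : 0 <= u by rewrite /u; lra.
have U0 : 0 <= (2-(l1+l2))*u by apply: mulr_ge0 => //; lra.
have U2 : 0 <= u^+2 by apply: sqr_ge0.
split; first lra.
move=> Heq.
have eu : u^+2 = 0 by lra.
move/eqP: eu; rewrite sqrf_eq0 => /eqP eu.
have eA : (l2+l3)*A = 0 by rewrite /u in eu; lra.
have eB : (l1+l3)*B = 0 by rewrite /u in eu; lra.
have eC : (l1+l2)*C = 0 by rewrite /u in eu; lra.
have zA : A = 0 by move/eqP: eA; rewrite mulf_eq0 => /orP[/eqP|/eqP] //; lra.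
have zB : B = 0 by move/eqP: eB; rewrite mulf_eq0 => /orP[/eqP|/eqP] //; lra.
have zC : C = 0 by move/eqP: eC; rewrite mulf_eq0 => /orP[/eqP|/eqP] //; lra.
rewrite /A in zA; rewrite /B in zB; rewrite /C in zC.
split; lra.
Qed.

Lemma SO3_cof {R : rcfType} {a b c d e f g h k : R} :
  SO3 (mx3 a b c d e f g h k) -> k = a*e - b*d.
Proof.
case/SO3_mx3 => r1 r2 r3 r12 [r13 r23 c1 c2 [c3 hd]].
by have [_ _ ck] := (@rot_cof _ a b c d e f g h k r1 r2 r3 r12 hd).
Qed.

Lemma sq2_0 {R : rcfType} (x y : R) : x*x + y*y = 0 -> x = 0 /\ y = 0.
Proof.
move=> H.
have [-> -> _] : [/\ x = 0, y = 0 & (0:R) = 0] by apply: sos3_0; lra.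
by [].
Qed.

Lemma SO3_diag {R : rcfType} {a b c d e f g h k : R} :
  SO3 (mx3 a b c d e f g h k) -> a*a = 1 -> e*e = 1 -> k*k = 1 ->
  [/\ b = 0, c = 0, d = 0, f = 0 & [/\ g = 0 & h = 0]].
Proof.
case/SO3_mx3 => r1 r2 r3 r12 [r13 r23 c1 c2 [c3 hd]] ha he hk.
have [-> ->] : b = 0 /\ c = 0 by apply: sq2_0; lra.
have [-> ->] : d = 0 /\ f = 0 by apply: sq2_0; lra.
have [-> ->] : g = 0 /\ h = 0 by apply: sq2_0; lra.
by [].
Qed.

Lemma SO3_of {R : rcfType} (a b c d e f g h k : R) :
  (mx3 a b c d e f g h k)^T *m mx3 a b c d e f g h k = mx3 1 0 0 0 1 0 0 0 1 ->
  a*(e*k - f*h) - b*(d*k - f*g) + c*(d*h - e*g) = 1 ->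
  SO3 (mx3 a b c d e f g h k).
Proof. by move=> H1 H2; split; rewrite ?one_mx3 ?det_mx3. Qed.

Lemma SO3_gen {R : rcfType} (l1 l2 l3 : R) {Q : 'M[R]_3} : SO3 Q ->
  [/\ W10 (mx3 l1 0 0 0 l2 0 0 0 l3) Q = Fd l1 l2 l3 (Q i0 i0) (Q i1 i1) (Q i2 i2),
      0 <= 1 + Q i0 i0 - Q i1 i1 - Q i2 i2, 0 <= 1 - Q i0 i0 + Q i1 i1 - Q i2 i2,
      0 <= 1 - Q i0 i0 - Q i1 i1 + Q i2 i2 & 0 <= 1 + Q i0 i0 + Q i1 i1 + Q i2 i2].
Proof.
move=> HQ; rewrite [in W10 _ Q](mx3E Q); apply: SO3_facts.
by rewrite -mx3E.
Qed.

Theorem mainTheorem9 (R : rcfType) (l1 l2 l3 : R)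
  (h12 : l2 < l1) (h23 : l3 < l2) (h3 : 0 < l3) :
  let D := mx3 l1 0 0  0 l2 0  0 0 l3 in
  (* (i) *)
  (forall Q : 'M[R]_3,
     isGlobalMax D Q <-> Q = mx3 (-1) 0 0  0 (-1) 0  0 0 1)
  /\
  (* (ii) *)
  (2 < l1 + l2 ->
     let c := 2 / (l1 + l2) in
     let s := Num.sqrt (1 - c ^+ 2) in
     let Qp := mx3 c (- s) 0  s c 0  0 0 1 in
     let Qm := mx3 c s 0  (- s) c 0  0 0 1 in
     (forall Q : 'M[R]_3, isGlobalMin D Q <-> (Q = Qp \/ Q = Qm))
     /\ W10 D Qp = (l3 - 1) ^+ 2 + 2^-1 * (l1 - l2) ^+ 2
     /\ W10 D Qm = (l3 - 1) ^+ 2 + 2^-1 * (l1 - l2) ^+ 2)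
  /\
  (* (iii) *)
  (l1 + l2 <= 2 ->
     forall Q : 'M[R]_3, isGlobalMin D Q <-> Q = 1%:M).
Proof.
move=> D.
set Fmax := l1^+2 + l2^+2 + l3^+2 + 2*(l1+l2-l3) + 3.
have SOmax : SO3 (mx3 (-1) 0 0  0 (-1) 0  0 0 (1:R)).
  apply: SO3_of; last by ring.
  by rewrite tr_mx3 mul_mx3; congr mx3; ring.
have Wmax : W10 D (mx3 (-1) 0 0  0 (-1) 0  0 0 1) = Fmax.
  have [-> _ _ _ _] := SO3_facts l1 l2 l3 SOmax.
  by rewrite /Fd /Fmax; field.
split.
  move=> Q; split.
    case=> HQ Hmax.
    have := Hmax _ SOmax; rewrite Wmax.
    have [-> hA hB hC hD] := SO3_gen l1 l2 l3 HQ.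
    have [hle heq] := Fmax_lem h12 h23 h3 hA hB hC hD.
    move=> hge.
    have [ea ee ek] : [/\ Q i0 i0 = -1, Q i1 i1 = -1 & Q i2 i2 = 1] by apply: heq; rewrite /Fmax in hge; lra.
    move: HQ; rewrite (mx3E Q) ea ee ek => HQ.
    have [-> -> -> -> [-> ->]] := SO3_diag HQ ltac:(ring) ltac:(ring) ltac:(ring).
    by [].
  move=> ->; split => // S HS.
  have [-> hA hB hC hD] := SO3_gen l1 l2 l3 HS.
  rewrite Wmax.
  by have [] := Fmax_lem h12 h23 h3 hA hB hC hD.
split.
  move=> hp c s Qp Qm.
  have pn : l1 + l2 != 0 by apply/eqP; lra.
  have pc : (l1 + l2) * c = 2 by rewrite /c; field.
  have c0 : 0 < c by rewrite /c; apply: divr_gt0; lra.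
  have c1 : c < 1.
    rewrite /c ltr_pdivrMr; last by lra.
    lra.
  have s2 : s ^+ 2 = 1 - c ^+ 2.
    by rewrite /s sqr_sqrtr //; nra.
  set m := (l3 - 1) ^+ 2 + 2^-1 * (l1 - l2) ^+ 2.
  have SOp : SO3 Qp.
    apply: SO3_of.
      by rewrite tr_mx3 mul_mx3; congr mx3; lra.
    lra.
  have SOm : SO3 Qm.
    apply: SO3_of.
      by rewrite tr_mx3 mul_mx3; congr mx3; lra.
    lra.
  have Fm : Fd l1 l2 l3 c c 1 = m.
    have pc2 : ((l1 + l2) * c)^+2 = 4 by rewrite pc; ring.
    have pc3 : l3 * ((l1 + l2) * c) = l3 * 2 by rewrite pc.
    rewrite /Fd /m; lra.
  have Wp' : W10 D Qp = m.
    by have [-> _ _ _ _] := SO3_facts l1 l2 l3 SOp.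
  have Wm' : W10 D Qm = m.
    by have [-> _ _ _ _] := SO3_facts l1 l2 l3 SOm.
  split; last by split.
  move=> Q; split.
    case=> HQ Hmin.
    have := Hmin _ SOp; rewrite Wp'.
    have [-> hA hB hC hD] := SO3_gen l1 l2 l3 HQ.
    have [hle heq] := Fmin2_lem h12 h23 h3 hp hA hB hC hD.
    move=> hge.
    have [ea ee ek] : [/\ Q i0 i0 = c, Q i1 i1 = c & Q i2 i2 = 1].
      by apply: heq; rewrite /m in hge; clear -hle hge; lra.
    move: HQ; rewrite (mx3E Q) ea ee ek => HQ.
    have ck := SO3_cof HQ.
    case/SO3_mx3: HQ => r1 r2 r3 r12 [r13 r23 cc1 cc2 [cc3 hd]].
    have [z1 z2] : Q i2 i0 = 0 /\ Q i2 i1 = 0 by apply: sq2_0; clear -r3; lra.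
    have [z3 z4] : Q i0 i2 = 0 /\ Q i1 i2 = 0 by apply: sq2_0; clear -cc3; lra.
    rewrite z1 z2 z3 z4 in r1 r2 ck *.
    have bd : Q i1 i0 = - Q i0 i1.
      have : (Q i0 i1 + Q i1 i0) ^+ 2 = 0 by clear -r1 r2 ck; lra.
      move/eqP; rewrite sqrf_eq0 addrC addr_eq0 => /eqP //.
    rewrite bd.
    have : (Q i0 i1 - s) * (Q i0 i1 + s) = 0 by clear -r1 s2; lra.
    move/eqP; rewrite mulf_eq0 => /orP[|] /eqP hb.
      have e : Q i0 i1 = s by apply/eqP; rewrite -subr_eq0 hb.
      by right; rewrite /Qm e.
    have e : Q i0 i1 = - s by apply/eqP; rewrite -addr_eq0 hb.
    by left; rewrite /Qp e opprK.
  case=> ->.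
    split => // S HS.
    have [-> hA hB hC hD] := SO3_gen l1 l2 l3 HS.
    rewrite Wp'.
    by have [] := Fmin2_lem h12 h23 h3 hp hA hB hC hD.
  split => // S HS.
  have [-> hA hB hC hD] := SO3_gen l1 l2 l3 HS.
  rewrite Wm'.
  by have [] := Fmin2_lem h12 h23 h3 hp hA hB hC hD.
move=> hp Q.
have SO1 : SO3 (1%:M : 'M[R]_3).
  rewrite one_mx3; apply: SO3_of; last by ring.
  by rewrite tr_mx3 mul_mx3; congr mx3; ring.
have W1 : W10 D 1%:M = Fd l1 l2 l3 1 1 1.
  have SO1' : SO3 (mx3 1 0 0 0 1 0 0 0 (1:R)) by rewrite -one_mx3.
  have := SO3_facts l1 l2 l3 SO1'.
  by rewrite -one_mx3 => -[].
split.
  case=> HQ Hmin.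
  have := Hmin _ SO1; rewrite W1.
  have [-> hA hB hC hD] := SO3_gen l1 l2 l3 HQ.
  have [hle heq] := Fmin3_lem h12 h23 h3 hp hA hB hC hD.
  move=> hge.
  have [ea ee ek] : [/\ Q i0 i0 = 1, Q i1 i1 = 1 & Q i2 i2 = 1].
    by apply: heq; lra.
  move: HQ; rewrite (mx3E Q) ea ee ek => HQ.
  have [-> -> -> -> [-> ->]] := SO3_diag HQ ltac:(ring) ltac:(ring) ltac:(ring).
  by rewrite one_mx3.
move=> ->; split => // S HS.
have [-> hA hB hC hD] := SO3_gen l1 l2 l3 HS.
rewrite W1.
by have [] := Fmin3_lem h12 h23 h3 hp hA hB hC hD.
Qed.
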